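(* Let $V$ be an $n$-dimensional complex vector space with basis $e_1,\ldots,e_n$ and dual basis $e_1^*,\ldots,e_n^*$. Let $a_{ij}=e_i\otimes e_j-e_j\otimes e_i\in\Lambda_2(V)$ and $b_{ij}=e_i^*\otimes e_j^*+e_j^*\otimes e_i^*\in S_2(V^* )$, and let $A=(a_{ij})_{1\le i,j\le n}$, $B=(b_{ij})_{1\le i,j\le n}\in\operatorname{Mat}_{n,n}(\Lambda(\Lambda_2(V)\oplus S_2(V^* )))$. Then $\operatorname{tr}((AB)^k)=0$ for every $k>0$.
   Context: $\Lambda(\Lambda_2(V)\oplus S_2(V^* ))$ is the exterior algebra on $\Lambda_2(V)\oplus S_2(V^* )$; the $a_{ij}$ and $b_{ij}$ are elements of degree one in it (so they pairwise anticommute), with $a_{ji}=-a_{ij}$ and $b_{ji}=b_{ij}$. Matrix products are taken with entries multiplied in the order written. *)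

(* Defs.v *)
From HB Require Import structures.
From mathcomp Require Import all_boot all_order all_algebra.
From mathcomp Require Import complex.
Set Implicit Arguments. Unset Strict Implicit. Unset Printing Implicit Defensive.
Import Order.TTheory GRing.Theory Num.Theory.
Local Open Scope ring_scope.

(* Exterior algebra Λ(W) over a commutative ring F, where W is free with
   basis indexed by a finite type X.  An element is a finite function
   {set X} -> F giving its coordinates on the basis e_S = e_{x1}∧...∧e_{xk}
   (x1 < ... < xk in the order of enum_rank). *)
Section Exterior.
Variables (F : comNzRingType) (X : finType).

Definition extalg := {ffun {set X} -> F}.

(* number of pairs (a,b) in A x B with b < a: sign of e_A ∧ e_B = ± e_{A∪B} *)
Definition ext_inv (A B : {set X}) : nat :=
  #|[set p : X * X | [&& p.1 \in A, p.2 \in B & (enum_rank p.2 < enum_rank p.1)%N]]|.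

Definition ext_mul (u v : extalg) : extalg :=
  [ffun S : {set X} => \sum_(A : {set X}) \sum_(B : {set X})
     if [disjoint A & B] && (A :|: B == S)
     then (-1) ^+ ext_inv A B * u A * v B else 0].

Definition ext_one : extalg := [ffun S : {set X} => (S == set0)%:R].

Definition ext_gen (x : X) : extalg := [ffun S : {set X} => (S == [set x])%:R].

Definition emx (n : nat) := 'I_n -> 'I_n -> extalg.
Definition emx_mul n (M N : emx n) : emx n :=
  fun i j => \sum_(l < n) ext_mul (M i l) (N l j).
Definition emx_one n : emx n := fun i j => if i == j then ext_one else 0.
Definition emx_pow n (M : emx n) (k : nat) : emx n :=
  iter k (fun Q => emx_mul Q M) (@emx_one n).
Definition emx_tr n (M : emx n) : extalg := \sum_(i < n) M i i.
End Exterior.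

(* Generators: inl (i,j) is e_i ⊗ e_j in V ⊗ V, inr (i,j) is e_i^* ⊗ e_j^*
   in V^* ⊗ V^*.  Λ_2(V) ⊕ S_2(V^* ) is a subspace of V⊗V ⊕ V^*⊗V^*, so
   Λ(Λ_2(V) ⊕ S_2(V^* )) is the subalgebra of Λ(V⊗V ⊕ V^*⊗V^* ) it generates. *)
Definition genT (n : nat) : finType := (('I_n * 'I_n) + ('I_n * 'I_n))%type.

Definition amx (F : comNzRingType) (n : nat) : emx F (genT n) n :=
  fun i j => ext_gen F (inl (i, j) : genT n) - ext_gen F (inl (j, i) : genT n).
Definition bmx (F : comNzRingType) (n : nat) : emx F (genT n) n :=
  fun i j => ext_gen F (inr (i, j) : genT n) + ext_gen F (inr (j, i) : genT n).

(* Main.v *)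
Require Import Defs.
From HB Require Import structures.
From mathcomp Require Import all_boot all_order all_algebra.
From mathcomp Require Import complex.
From mathcomp Require Import ring zify.
From Stdlib Require Import FunctionalExtensionality.
Set Implicit Arguments. Unset Strict Implicit. Unset Printing Implicit Defensive.
Import Order.TTheory GRing.Theory Num.Theory.
Local Open Scope ring_scope.
Section Ext.
Variables (F : comNzRingType) (X : finType).
Local Notation E := (extalg F X).
Local Notation mul := (@ext_mul F X).
Local Notation r := (@enum_rank X).

Definition inv2 (A B : {set X}) : nat :=
  (\sum_(a in A) \sum_(b in B) (r b < r a : nat))%N.

Lemma ext_invE (A B : {set X}) : ext_inv A B = inv2 A B.
Proof.
rewrite /ext_inv /inv2 -sum1_card [RHS]pair_big_dep /=.
rewrite big_mkcond [RHS]big_mkcond /=; apply: eq_bigr => p _.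
rewrite inE; by case: (p.1 \in A); case: (p.2 \in B); case: (_ < _)%N.
Qed.

Lemma inv_swap (A B : {set X}) : [disjoint A & B] ->
  (ext_inv A B + ext_inv B A = #|A| * #|B|)%N.
Proof.
move=> dAB; rewrite !ext_invE /inv2 [X in (_ + X)%N]exchange_big /= -big_split /=.
rewrite (eq_bigr (fun _ => #|B|)) ?sum_nat_const // => a aA.
rewrite -big_split /= (eq_bigr (fun _ => 1%N)) ?sum1_card // => b bB.
have: a != b.
  apply/eqP => eab; move: dAB; rewrite disjoint_sym => /disjointFr/(_ bB).
  by rewrite -eab aA.
rewrite -(inj_eq (@enum_rank_inj X)).
move=> h; have {h} : (r a : nat) != r b by rewrite val_eqE.
set x := (r a : nat); set y := (r b : nat); case: ltngtP => //.
Qed.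

Lemma invUl (A B C : {set X}) : [disjoint A & B] ->
  ext_inv (A :|: B) C = (ext_inv A C + ext_inv B C)%N.
Proof.
move=> dAB; rewrite !ext_invE /inv2 -bigU //=.
by apply: eq_bigl => a; rewrite !inE.
Qed.

Lemma invUr (A B C : {set X}) : [disjoint B & C] ->
  ext_inv A (B :|: C) = (ext_inv A B + ext_inv A C)%N.
Proof.
move=> dBC; rewrite !ext_invE /inv2 -big_split /=; apply: eq_bigr => a _.
rewrite -bigU //=; by apply: eq_bigl => b; rewrite !inE.
Qed.


Lemma disjUl (A B C : {set X}) :
  [disjoint A :|: B & C] = [disjoint A & C] && [disjoint B & C].
Proof. by rewrite !disjoints_subset subUset. Qed.

Lemma disjUr (A B C : {set X}) :
  [disjoint A & B :|: C] = [disjoint A & B] && [disjoint A & C].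
Proof. by rewrite ![[disjoint A & _]]disjoint_sym disjUl. Qed.

Definition sg (A B : {set X}) : F := (-1) ^+ ext_inv A B.

Lemma emulE (u v : E) S : mul u v S =
  \sum_(A : {set X}) \sum_(B : {set X})
     if [disjoint A & B] && (A :|: B == S) then sg A B * u A * v B else 0.
Proof. by rewrite ffunE. Qed.

Lemma emulDl (u v w : E) : mul (u + v) w = mul u w + mul v w.
Proof.
apply/ffunP => S; rewrite !ffunE -big_split; apply: eq_bigr => A _.
rewrite -big_split; apply: eq_bigr => B _ /=; rewrite ffunE.
by case: ifP => _; [ring | rewrite addr0].
Qed.

Lemma emulDr (u v w : E) : mul u (v + w) = mul u v + mul u w.
Proof.
apply/ffunP => S; rewrite !ffunE -big_split; apply: eq_bigr => A _.
rewrite -big_split; apply: eq_bigr => B _ /=; rewrite ffunE.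
by case: ifP => _; [ring | rewrite addr0].
Qed.

Lemma emul0l (w : E) : mul 0 w = 0.
Proof.
apply/ffunP => S; rewrite !ffunE; apply: big1 => A _; apply: big1 => B _.
by rewrite ffunE; case: ifP => _; rewrite ?mulr0 ?mul0r.
Qed.

Lemma emul0r (w : E) : mul w 0 = 0.
Proof.
apply/ffunP => S; rewrite !ffunE; apply: big1 => A _; apply: big1 => B _.
by rewrite ffunE; case: ifP => _; rewrite ?mulr0 ?mul0r.
Qed.

Lemma emulNl (u w : E) : mul (- u) w = - mul u w.
Proof.
apply/ffunP => S; rewrite !ffunE -sumrN; apply: eq_bigr => A _.
rewrite -sumrN; apply: eq_bigr => B _ /=; rewrite ffunE.
by case: ifP => _; [ring | rewrite oppr0].
Qed.

Lemma emulNr (u w : E) : mul u (- w) = - mul u w.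
Proof.
apply/ffunP => S; rewrite !ffunE -sumrN; apply: eq_bigr => A _.
rewrite -sumrN; apply: eq_bigr => B _ /=; rewrite ffunE.
by case: ifP => _; [ring | rewrite oppr0].
Qed.

Lemma emul_suml (I : Type) (rr : seq I) (P : pred I) (f : I -> E) (w : E) :
  mul (\sum_(i <- rr | P i) f i) w = \sum_(i <- rr | P i) mul (f i) w.
Proof. exact: (big_morph (fun u => mul u w) (fun u v => emulDl u v w) (emul0l w)). Qed.

Lemma emul_sumr (I : Type) (rr : seq I) (P : pred I) (f : I -> E) (w : E) :
  mul w (\sum_(i <- rr | P i) f i) = \sum_(i <- rr | P i) mul w (f i).
Proof. exact: (big_morph (fun u => mul w u) (fun u v => emulDr w u v) (emul0r w)). Qed.

Lemma sum_pick (K : {set X}) (f : {set X} -> F) :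
  \sum_(C : {set X}) (if C == K then f C else 0) = f K.
Proof. by rewrite -big_mkcond big_pred1_eq. Qed.

Lemma disj0l (B : {set X}) : [disjoint set0 & B].
Proof. by rewrite disjoints_subset sub0set. Qed.

Lemma disj0r (B : {set X}) : [disjoint B & set0].
Proof. by rewrite disjoint_sym disj0l. Qed.

Lemma emul1l (u : E) : mul (ext_one F X) u = u.
Proof.
apply/ffunP => S; rewrite emulE (bigD1 set0) //=.
rewrite [X in _ + X]big1 ?addr0; last first.
  move=> A nA; apply: big1 => B _; rewrite ffunE (negbTE nA) mulr0n.
  by case: ifP => _; rewrite ?mulr0 ?mul0r.
rewrite -[RHS](sum_pick S u); apply: eq_bigr => B _.
rewrite ffunE eqxx disj0l set0U /sg.
have -> : ext_inv set0 B = 0%N.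
  by apply/eqP; rewrite cards_eq0; apply/eqP/setP => p; rewrite !inE.
by rewrite expr0 mul1r mulr1n mul1r.
Qed.

Lemma emul1r (u : E) : mul u (ext_one F X) = u.
Proof.
apply/ffunP => S; rewrite emulE -[RHS](sum_pick S u); apply: eq_bigr => A _.
rewrite (bigD1 set0) //= big1 ?addr0; last first.
  move=> B nB; rewrite ffunE (negbTE nB) mulr0n.
  by case: ifP => _; rewrite ?mulr0 ?mul0r.
rewrite ffunE eqxx disj0r setU0 /sg.
have -> : ext_inv A set0 = 0%N.
  by apply/eqP; rewrite cards_eq0; apply/eqP/setP => p; rewrite !inE andbF.
by rewrite expr0 mul1r mulr1n mulr1.
Qed.

Definition c3 (A B D S : {set X}) :=
  [&& [disjoint A & B], [disjoint A & D], [disjoint B & D] & (A :|: B :|: D == S)].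

Lemma emulA (u v w : E) : mul (mul u v) w = mul u (mul v w).
Proof.
apply/ffunP => S.
transitivity (\sum_(A : {set X}) \sum_(B : {set X}) \sum_(D : {set X})
  (if c3 A B D S then (-1) ^+ (ext_inv A B + ext_inv A D + ext_inv B D)
     * u A * v B * w D else 0)).
  rewrite emulE.
  transitivity (\sum_(C : {set X}) \sum_(D : {set X}) \sum_(A : {set X}) \sum_(B : {set X})
    (if ([disjoint C & D] && (C :|: D == S)) && ([disjoint A & B] && (A :|: B == C))
     then sg C D * sg A B * u A * v B * w D else 0)).
    apply: eq_bigr => C _; apply: eq_bigr => D _; rewrite emulE.
    case: ifP => h /=.
      rewrite mulr_sumr mulr_suml; apply: eq_bigr => A _.
      rewrite mulr_sumr mulr_suml; apply: eq_bigr => B _.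
      by case: ifP => _; [ring | rewrite mulr0 mul0r].
    by rewrite big1 // => A _; rewrite big1.
  rewrite exchange_big /=.
  under eq_bigr => D _ do rewrite exchange_big /=.
  under eq_bigr => D _ do under eq_bigr => A _ do rewrite exchange_big /=.
  rewrite exchange_big /=.
  under eq_bigr => A _ do rewrite exchange_big /=.
  apply: eq_bigr => A _; apply: eq_bigr => B _; apply: eq_bigr => D _.
  rewrite (eq_bigr (fun C => if C == A :|: B then (if ([disjoint C & D] && (C :|: D == S)) && [disjoint A & B]
     then sg C D * sg A B * u A * v B * w D else 0) else 0)); last first.
    move=> C _; case: (eqVneq C (A :|: B)) => [-> | ne].
      by rewrite andbT.
    by rewrite !andbF.
  rewrite sum_pick /c3 disjUl.
  case dAB : [disjoint A & B]; rewrite ?andbF //=.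
  rewrite andbT !andbA; case: ifP => // _.
  by rewrite /sg invUl // !exprD; ring.
rewrite emulE.
transitivity (\sum_(A : {set X}) \sum_(C : {set X}) \sum_(B : {set X}) \sum_(D : {set X})
    (if ([disjoint A & C] && (A :|: C == S)) && ([disjoint B & D] && (B :|: D == C))
     then sg A C * sg B D * u A * v B * w D else 0)); last first.
  apply: eq_bigr => A _; apply: eq_bigr => C _; rewrite emulE.
  case: ifP => h /=.
    rewrite mulr_sumr; apply: eq_bigr => B _.
    rewrite mulr_sumr; apply: eq_bigr => D _.
    by case: ifP => _; [ring | rewrite mulr0].
  by rewrite big1 // => B _; rewrite big1.
apply: eq_bigr => A _.
rewrite [RHS]exchange_big /=.
under [RHS]eq_bigr => B _ do rewrite exchange_big /=.
apply: eq_bigr => B _; apply: eq_bigr => D _.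
rewrite (eq_bigr (fun C => if C == B :|: D then (if ([disjoint A & C] && (A :|: C == S)) && [disjoint B & D]
     then sg A C * sg B D * u A * v B * w D else 0) else 0)); last first.
  move=> C _; case: (eqVneq C (B :|: D)) => [-> | ne].
    by rewrite andbT.
  by rewrite !andbF.
rewrite sum_pick /c3 disjUr setUA.
case dBD : [disjoint B & D]; rewrite ?andbF //=.
rewrite andbT !andbA; case: ifP => // _.
by rewrite /sg invUr // !exprD; ring.
Qed.

Definition homog (d : nat) (u : E) := forall S : {set X}, #|S| != d -> u S = 0.

Lemma homog_mul p q u v : homog p u -> homog q v -> homog (p + q) (mul u v).
Proof.
move=> hu hv S hS; rewrite emulE; apply: big1 => A _; apply: big1 => B _.
case: ifP => // /andP[dAB /eqP eS].
have e : #|S| = (#|A| + #|B|)%N.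
  by rewrite -eS cardsU (disjoint_setI0 dAB) cards0 subn0.
case: (eqVneq #|A| p) => hA; last by rewrite hu // mulr0 mul0r.
case: (eqVneq #|B| q) => hB; last by rewrite hv // mulr0.
by move: hS; rewrite e hA hB eqxx.
Qed.

Lemma homog0 d : homog d 0.
Proof. by move=> S _; rewrite ffunE. Qed.

Lemma homogD d u v : homog d u -> homog d v -> homog d (u + v).
Proof. by move=> hu hv S hS; rewrite ffunE hu // hv // addr0. Qed.

Lemma homogN d u : homog d u -> homog d (- u).
Proof. by move=> hu S hS; rewrite ffunE hu // oppr0. Qed.

Lemma homog_sum d (I : Type) (rr : seq I) (P : pred I) (f : I -> E) :
  (forall i, P i -> homog d (f i)) -> homog d (\sum_(i <- rr | P i) f i).
Proof.
move=> h; elim/big_rec: _ => [|i x Pi hx]; first exact: homog0.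
by apply: homogD => //; apply: h.
Qed.

Lemma homog_one : homog 0 (ext_one F X).
Proof. by move=> S hS; rewrite ffunE; move: hS; rewrite cards_eq0 => /negbTE ->. Qed.

Lemma homog_gen (x : X) : homog 1 (ext_gen F x).
Proof.
move=> S hS; rewrite ffunE; case: eqP => // eS.
by move: hS; rewrite eS cards1.
Qed.

Lemma emulC_sign p q u v S : homog p u -> homog q v ->
  mul u v S = (-1) ^+ (p * q) * mul v u S.
Proof.
move=> hu hv; rewrite !emulE [RHS]mulr_sumr.
under [RHS]eq_bigr => i _ do rewrite mulr_sumr.
rewrite [RHS]exchange_big /=.
apply: eq_bigr => A _; apply: eq_bigr => B _.
rewrite disjoint_sym setUC; case: ifP => [/andP[d _]|_]; last by rewrite mulr0.
case: (eqVneq #|A| p) => hA; last by rewrite hu // !(mulr0, mul0r).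
case: (eqVneq #|B| q) => hB; last by rewrite hv // !(mulr0, mul0r).
rewrite -hA -hB mulnC -(inv_swap d) /sg exprD.
have s2 : (-1) ^+ ext_inv B A * (-1) ^+ ext_inv B A = 1 :> F.
  by rewrite -exprD addnn -mul2n exprM sqrrN expr1n expr1n.
transitivity ((-1) ^+ ext_inv A B * ((-1) ^+ ext_inv B A * (-1) ^+ ext_inv B A)
   * u A * v B); first by rewrite s2 mulr1.
ring.
Qed.

Definition sgn (b : bool) (x : E) : E := if b then - x else x.

Lemma emulC p q u v : homog p u -> homog q v ->
  mul u v = sgn (odd p && odd q) (mul v u).
Proof.
move=> hu hv; apply/ffunP => S; rewrite (emulC_sign S hu hv) -signr_odd oddM /sgn.
by case: (odd p && odd q); rewrite ?expr0 ?expr1 ?mul1r ?mulN1r // [RHS]ffunE.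
Qed.

End Ext.

Section Mx.
Variables (F : comNzRingType) (X : finType) (n : nat).
Local Notation E := (extalg F X).
Local Notation mul := (@ext_mul F X).
Local Notation M := (emx F X n).
Local Notation mm := (@emx_mul F X n).
Local Notation one := (@emx_one F X n).

Definition mhomog d (A : M) := forall i j, homog d (A i j).
Definition tmx (A : M) : M := fun i j => A j i.
Definition nmx (A : M) : M := fun i j => - A i j.
Definition msgn b (A : M) : M := fun i j => sgn b (A i j).

Lemma mmulA (A B C : M) : mm (mm A B) C = mm A (mm B C).
Proof.
apply: functional_extensionality => i; apply: functional_extensionality => j.
rewrite /emx_mul; under eq_bigr => l _ do rewrite emul_suml.
rewrite exchange_big /=; apply: eq_bigr => m _; rewrite emul_sumr.
by apply: eq_bigr => l _; rewrite emulA.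
Qed.

Lemma mmul1l (A : M) : mm one A = A.
Proof.
apply: functional_extensionality => i; apply: functional_extensionality => j.
rewrite /emx_mul /emx_one (bigD1 i) //= eqxx emul1l big1 ?addr0 //.
by move=> l nl; rewrite eq_sym (negbTE nl) emul0l.
Qed.

Lemma mmul1r (A : M) : mm A one = A.
Proof.
apply: functional_extensionality => i; apply: functional_extensionality => j.
rewrite /emx_mul /emx_one (bigD1 j) //= eqxx emul1r big1 ?addr0 //.
by move=> l nl; rewrite (negbTE nl) emul0r.
Qed.

Lemma mhomog_mul p q (A B : M) : mhomog p A -> mhomog q B -> mhomog (p + q) (mm A B).
Proof.
move=> hA hB i j; apply: homog_sum => l _; exact: homog_mul.
Qed.

Lemma mhomog_one : mhomog 0 one.
Proof. move=> i j; rewrite /emx_one; case: eqP => _; [exact: homog_one | exact: homog0]. Qed.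

Lemma sgn_sum b (I : Type) (rr : seq I) (P : pred I) (f : I -> E) :
  sgn b (\sum_(i <- rr | P i) f i) = \sum_(i <- rr | P i) sgn b (f i).
Proof. by case: b => //=; rewrite sumrN. Qed.

Lemma mmul_tr p q (A B : M) : mhomog p A -> mhomog q B ->
  tmx (mm A B) = msgn (odd p && odd q) (mm (tmx B) (tmx A)).
Proof.
move=> hA hB; apply: functional_extensionality => i; apply: functional_extensionality => j.
rewrite /tmx /msgn /emx_mul sgn_sum; apply: eq_bigr => l _.
by rewrite (emulC (hA j l) (hB l i)).
Qed.

Lemma tr_mul p q (A B : M) : mhomog p A -> mhomog q B ->
  emx_tr (mm A B) = sgn (odd p && odd q) (emx_tr (mm B A)).
Proof.
move=> hA hB; rewrite /emx_tr /emx_mul [X in sgn _ X]exchange_big sgn_sum /=.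
apply: eq_bigr => i _; rewrite sgn_sum; apply: eq_bigr => l _.
by rewrite (emulC (hA i l) (hB l i)).
Qed.

Lemma mmulNr (A B : M) : mm A (nmx B) = nmx (mm A B).
Proof.
apply: functional_extensionality => i; apply: functional_extensionality => j.
by rewrite /nmx /emx_mul -sumrN; apply: eq_bigr => l _; rewrite emulNr.
Qed.

Lemma pow_homog d (P : M) j : mhomog d P -> mhomog (d * j) (emx_pow P j).
Proof.
move=> hP; elim: j => [|j IH]; first by rewrite muln0; exact: mhomog_one.
rewrite mulnS addnC; exact: (mhomog_mul IH hP).
Qed.

Lemma powS_l (P : M) j : emx_pow P j.+1 = mm P (emx_pow P j).
Proof.
elim: j => [|j IH]; first by rewrite /= mmul1l mmul1r.
rewrite (_ : emx_pow P j.+2 = mm (emx_pow P j.+1) P) // {1}IH mmulA.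
by [].
Qed.

Lemma tr_pow (P : M) j : mhomog 2 P -> tmx (emx_pow P j) = emx_pow (tmx P) j.
Proof.
move=> hP; elim: j => [|j IH].
  apply: functional_extensionality => i; apply: functional_extensionality => l.
  by rewrite /tmx /= /emx_one eq_sym.
rewrite [emx_pow P j.+1]/= (mmul_tr (pow_homog (j:=j) hP) hP) IH andbF powS_l.
by [].
Qed.

End Mx.

Lemma BA_pow (F : comNzRingType) (X : finType) (n : nat) (A B : emx F X n) j :
  emx_pow (emx_mul B A) j.+1 = emx_mul (emx_mul B (emx_pow (emx_mul A B) j)) A.
Proof.
elim: j => [|j IH].
  by rewrite /= mmul1l mmul1r.
rewrite (_ : emx_pow (emx_mul B A) j.+2 = emx_mul (emx_pow (emx_mul B A) j.+1) (emx_mul B A)) //.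
rewrite IH (_ : emx_pow (emx_mul A B) j.+1 = emx_mul (emx_pow (emx_mul A B) j) (emx_mul A B)) //.
by rewrite !mmulA.
Qed.

Theorem proposition5p4 (R : rcfType) (n k : nat) :
  (0 < k)%N ->
  emx_tr (emx_pow (emx_mul (@amx R[i] n) (@bmx R[i] n)) k) = 0.
Proof.
case: k => // j _.
set A := @amx R[i] n; set B := @bmx R[i] n.
have hA : mhomog 1 A by move=> a b; apply: homogD; [exact: homog_gen | apply: homogN; exact: homog_gen].
have hB : mhomog 1 B by move=> a b; apply: homogD; exact: homog_gen.
have tA : tmx A = nmx A.
  apply: functional_extensionality => a; apply: functional_extensionality => b.
  by rewrite /tmx /nmx /A /amx opprB.
have tB : tmx B = B.
  apply: functional_extensionality => a; apply: functional_extensionality => b.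
  by rewrite /tmx /B /bmx addrC.
set P := emx_mul A B.
have hP : mhomog 2 P by exact: (mhomog_mul hA hB).
have tP : tmx P = emx_mul B A.
  rewrite /P (mmul_tr hA hB) tA tB mmulNr.
  apply: functional_extensionality => a; apply: functional_extensionality => b.
  by rewrite /msgn /nmx /= opprK.
set T := emx_tr _.
have eT : T = - T.
  rewrite {1}/T (_ : emx_tr (emx_pow P j.+1) = emx_tr (tmx (emx_pow P j.+1))) //.
  rewrite tr_pow // tP BA_pow.
  have hY := pow_homog (j:=j) hP.
  rewrite (tr_mul (mhomog_mul hB hY) hA).
  have -> : odd (1 + 2 * j) && odd 1 = true by rewrite oddD oddM.
  by rewrite /= -mmulA -/P -powS_l.
apply/ffunP => S; rewrite ffunE.
have h := congr1 (fun f : extalg _ _ => f S) eT; rewrite /= ffunE in h.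
have : T S *+ 2 == 0 by rewrite mulr2n {1}h addNr.
by rewrite mulrn_eq0 /= => /eqP.
Qed.
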